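(* Let $N\ge 1$ be an integer and $\sigma>0$. Define $$Z_2(\sigma)=\frac{C_{N,2}(\sigma)}{(2\pi)^N N!}\int_{\mathbb{R}_+^N}\prod_{i=1}^N \exp\!\Big(-\frac{\log^2(u_i)}{2\sigma^2}\Big)\,|\Delta(u)|^{2}\prod_{i=1}^N du_i,\qquad C_{N,2}(\sigma)=\frac{\omega_2(N)(2\pi)^N}{2^{N^2}}\exp\!\Big(-N^3\frac{\sigma^2}{2}\Big).$$ Then $$Z_2(\sigma)=\frac{\omega_2(N)}{2^{N^2}}\,(2\pi\sigma^2)^{N/2}\exp\!\Big((N^3-N)\frac{\sigma^2}{6}\Big)\prod_{k=1}^{N-1}\big(1-e^{-k\sigma^2}\big)^{N-k}.$$ Equivalently, $$\int_{\mathbb{R}_+^N}\prod_{i=1}^N e^{-\log^2(u_i)/(2\sigma^2)}\,\Delta(u)^2\prod_i du_i = N!\,(2\pi\sigma^2)^{N/2}\exp\!\Big(\frac{N^3\sigma^2}{2}+\frac{(N^3-N)\sigma^2}{6}\Big)\prod_{k=1}^{N-1}(1-e^{-k\sigma^2})^{N-k}.$$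
   Context: $\Delta(u)=\prod_{i<j}(u_i-u_j)$ is the Vandermonde determinant of $u=(u_1,\dots,u_N)$, and $\mathbb{R}_+=(0,\infty)$. $\omega_2(N)>0$ is a constant depending only on $N$ (a normalization constant of the Riemannian volume), which appears as the same factor on both sides. $Z_2(\sigma)$ so defined is the partition function $\int \exp(-d(x,\bar x)^2/(2\sigma^2))\,d\mathrm{vol}(x)$ of the Riemannian Gaussian distribution on the space $\mathcal{P}_{\mathbb{C}}(N)\cong \mathrm{GL}(N,\mathbb{C})/\mathrm{U}(N)$ of Hermitian positive definite $N\times N$ matrices. *)

(* Defs.v *)
From mathcomp Require Import all_boot all_order all_algebra.
From mathcomp Require Import all_classical all_reals all_analysis.
Set Implicit Arguments. Unset Strict Implicit. Unset Printing Implicit Defensive.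
Import Order.TTheory GRing.Theory Num.Theory.
Local Open Scope classical_set_scope.
Local Open Scope ring_scope.

Definition vandermonde (R : pzRingType) (u : seq R) : R :=
  \prod_(i < size u) \prod_(j < size u | (i < j)%N) (u`_i - u`_j).

Fixpoint iter_int (R : realType) (n : nat) : (seq R -> \bar R) -> \bar R :=
  match n with
  | 0 => fun f => f [::]
  | n'.+1 => fun f =>
      (\int[@lebesgue_measure R]_(x in `]0%R, +oo[)
         iter_int n' (fun s => f (x :: s)))%E
  end.

Definition Z2_integrand (R : realType) (sigma : R) (u : seq R) : R :=
  (\prod_(x <- u) expR (- (ln x ^+ 2) / (2 * sigma ^+ 2)))
  * `|vandermonde u| ^+ 2.

Definition C_N2 (R : realType) (omega : R) (N : nat) (sigma : R) : R :=
  omega * (2 * pi) ^+ N / 2 ^+ (N ^ 2) * expR (- (N ^ 3)%:R * sigma ^+ 2 / 2).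

(* Z_2(sigma), with omega standing for omega_2(N) > 0. *)
Definition Z2 (R : realType) (omega : R) (N : nat) (sigma : R) : \bar R :=
  ((C_N2 omega N sigma / ((2 * pi) ^+ N * N`!%:R))%:E
   * iter_int N (fun u => (Z2_integrand sigma u)%:E))%E.

(* Main.v *)
Require Import Defs.
From mathcomp Require Import all_boot all_order all_algebra all_fingroup.
From mathcomp Require Import all_classical all_reals all_analysis.
From mathcomp Require Import measurable_realfun ring lra zify.
Import Order.TTheory GRing.Theory Num.Theory.
Import numFieldNormedType.Exports.
Local Open Scope classical_set_scope.
Local Open Scope ring_scope.
Section oneD.
Variables (R : realType) (sigma : R).
Hypothesis sigma_gt0 : 0 < sigma.
Notation mu := (@lebesgue_measure R).

Lemma int_normal_fun m : (\int[mu]_x (normal_fun m sigma x)%:E = (normal_peak sigma)^-1%:E)%E.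
Proof.
have s0 : sigma != 0 by rewrite gt_eqF.
have := integral_normal_pdf m sigma.
under eq_integral do rewrite normal_pdfE // EFinM.
rewrite ge0_integralZl //; last 3 first.
- by apply/measurable_EFinP; exact: measurable_normal_fun.
- by move=> x _; rewrite lee_fin normal_fun_ge0.
- by rewrite lee_fin normal_peak_ge0.
move=> h.
have p0 : normal_peak sigma != 0 by rewrite gt_eqF // normal_peak_gt0.
rewrite -[LHS]mul1e -[1%E](_ : ((normal_peak sigma)^-1 * normal_peak sigma)%:E = 1%E).
  by rewrite EFinM -muleA h mule1.
by rewrite mulVf.
Qed.

Definition gk (k : nat) (x : R) : R :=
  expR (- (ln x ^+ 2) / (2 * sigma ^+ 2)) * x ^+ k.
Definition mk (k : nat) : R :=
  Num.sqrt (2 * pi * sigma ^+ 2) * expR ((k.+1)%:R ^+ 2 * sigma ^+ 2 / 2).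
Definition Gk (k : nat) (t : R) : R :=
  expR ((k.+1)%:R ^+ 2 * sigma ^+ 2 / 2) * normal_fun ((k.+1)%:R * sigma ^+ 2) sigma t.

Lemma gk_ge0 k x : 0 < x -> 0 <= gk k x.
Proof. by move=> x0; rewrite /gk mulr_ge0 ?expR_ge0 ?exprn_ge0 ?ltW. Qed.

Lemma gk_expR k t : gk k (expR t) * expR t = Gk k t.
Proof.
rewrite /gk /Gk /normal_fun expRK -expRM_natl -!expRD; congr expR.
have s0 : sigma != 0 by rewrite gt_eqF.
rewrite -[(k.+1)%:R]natr1 -mulr_natr; field; exact: s0.
Qed.


Lemma cont_gk k x : 0 < x -> {for x, continuous (gk k)}.
Proof.
move=> x0; apply: continuousM; last exact: exprn_continuous.
have h1 : {for x, continuous (fun y : R => ln y ^+ 2)}.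
  exact: (continuous_comp (continuous_ln x0) (@exprn_continuous _ 2 (ln x))).
have h2 : {for x, continuous (fun y : R => - (ln y ^+ 2) / (2 * sigma ^+ 2))}.
  by apply: continuousM; [exact: continuousN|exact: cst_continuous].
exact: (continuous_comp h2 (@continuous_expR _ _)).
Qed.

Lemma derive1_expR : (expR : R -> R)^`()%classic = expR.
Proof. by apply/funext => t; rewrite derive1E; apply: derive_val. Qed.

Definition An (n : nat) : set R := `[expR (- n%:R), expR n%:R].
Definition Bn (n : nat) : set R := `[- n%:R, n%:R].

Lemma subst_n k (n : nat) :
  (\int[mu]_(x in An n) (gk k x)%:E =
   \int[mu]_(t in Bn n) (Gk k t)%:E)%E.
Proof.
rewrite /An /Bn.
rewrite (@integration_by_substitution_increasing _ expR (gk k) (- n%:R) n%:R).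
- by apply: eq_integral => t _; rewrite derive1_expR; congr EFin; exact: gk_expR.
- by apply: (@le_trans _ _ 0); rewrite ?oppr_le0 ler0n.
- by move=> x y _ _; rewrite ltr_expR.
- by rewrite derive1_expR => x _; exact: continuous_expR.
- by rewrite derive1_expR; apply/cvgP/cvg_at_right_filter/continuous_expR.
- by rewrite derive1_expR; apply/cvgP/cvg_at_left_filter/continuous_expR.
- split.
  + by move=> x _; exact: ex_derive.
  + exact/cvg_at_right_filter/continuous_expR.
  + exact/cvg_at_left_filter/continuous_expR.
- apply: continuous_in_subspaceT => x; rewrite inE /= in_itv /= => /andP[+ _].
  by move=> h; apply: cont_gk; apply: lt_le_trans h; exact: expR_gt0.
Qed.


Lemma ndAn : {homo An : n m / (n <= m)%N >-> (n <= m)%O}.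
Proof.
move=> n m nm; rewrite subsetEset => x; rewrite /An /= !in_itv /= => /andP[h1 h2].
have nm' : (n%:R <= m%:R :> R) by rewrite ler_nat.
apply/andP; split.
  by apply: le_trans h1; rewrite ler_expR lerN2.
by apply: le_trans h2 _; rewrite ler_expR.
Qed.

Lemma ndBn : {homo Bn : n m / (n <= m)%N >-> (n <= m)%O}.
Proof.
move=> n m nm; rewrite subsetEset => x; rewrite /Bn /= !in_itv /= => /andP[h1 h2].
have nm' : (n%:R <= m%:R :> R) by rewrite ler_nat.
by apply/andP; split; lra.
Qed.

Lemma An_sub n : An n `<=` `]0, +oo[%classic.
Proof.
move=> x; rewrite /An /= !in_itv /= andbT => /andP[h1 _].
by apply: lt_le_trans h1; exact: expR_gt0.
Qed.

Lemma bigcupAn : \bigcup_n An n = `]0, +oo[%classic.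
Proof.
apply/seteqP; split; first by move=> x [n _]; exact: An_sub.
move=> x; rewrite /= in_itv /= andbT => x0.
have h := @archi_boundP R (x + x^-1).
have xi0 : 0 < x^-1 by rewrite invr_gt0.
have := h (addr_ge0 (ltW x0) (ltW xi0)).
set n := Num.Def.archi_bound _ => hn.
exists n => //; rewrite /An /= in_itv /=.
have en := expR_ge1Dx (n%:R : R).
apply/andP; split; last by apply/ltW; lra.
rewrite expRN -[x]invrK lef_pV2 ?posrE ?expR_gt0 //; apply/ltW; lra.
Qed.

Lemma bigcupBn : \bigcup_n Bn n = setT.
Proof.
apply/seteqP; split => // x _.
have := @archi_boundP R `|x| (normr_ge0 x).
set n := Num.Def.archi_bound _ => hn.
exists n => //; rewrite /Bn /= in_itv /=.
have h1 := ler_norm x; have h2 := ler_norm (- x); rewrite normrN in h2.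
by apply/andP; split; lra.
Qed.


Lemma mgk k : measurable_fun (`]0, +oo[%classic : set R) (gk k).
Proof.
apply: open_continuous_measurable_fun; first exact: interval_open.
move=> x; rewrite inE /= in_itv /= andbT; exact: cont_gk.
Qed.

Lemma mGk k : measurable_fun setT (Gk k).
Proof. by apply: measurable_funM => //; exact: measurable_normal_fun. Qed.

Lemma Gk_ge0 k t : 0 <= Gk k t.
Proof. by rewrite /Gk mulr_ge0 ?expR_ge0 ?normal_fun_ge0. Qed.

Lemma int_Gk k : (\int[mu]_t (Gk k t)%:E = (mk k)%:E)%E.
Proof.
under eq_integral do rewrite /Gk EFinM.
rewrite ge0_integralZl //; [|by apply/measurable_EFinP; exact: measurable_normal_fun|by move=> x _; rewrite lee_fin normal_fun_ge0].
rewrite int_normal_fun -EFinM /mk /normal_peak invrK mulrC; congr (_ * _)%:E.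
congr Num.sqrt; rewrite -mulr_natr; ring.
Qed.

Lemma int_gk k : (\int[mu]_(x in `]0%R, +oo[) (gk k x)%:E = (mk k)%:E)%E.
Proof.
rewrite -int_Gk.
have mA n : measurable (An n) by rewrite /An; exact: measurable_itv.
have mB n : measurable (Bn n) by rewrite /Bn; exact: measurable_itv.
have hA : (\int[mu]_(x in An i) (gk k x)%:E)%E @[i --> \oo] --> (\int[mu]_(x in \bigcup_n An n) (gk k x)%:E)%E.
  apply: ge0_nondecreasing_set_cvg_integral => //.
  - exact: ndAn.
  - move=> n; apply/measurable_EFinP; apply: measurable_funS (mgk k) => //.
    exact: An_sub.
  - by move=> n x /An_sub; rewrite /= in_itv /= andbT => x0; rewrite lee_fin gk_ge0.
have hB : (\int[mu]_(x in Bn i) (Gk k x)%:E)%E @[i --> \oo] --> (\int[mu]_(x in \bigcup_n Bn n) (Gk k x)%:E)%E.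
  apply: ge0_nondecreasing_set_cvg_integral => //.
  - exact: ndBn.
  - by move=> n; apply/measurable_EFinP; apply: measurable_funS (mGk k).
  - by move=> n x _; rewrite lee_fin Gk_ge0.
rewrite bigcupAn in hA; rewrite bigcupBn in hB.
rewrite -(cvg_lim _ hA) // -(cvg_lim _ hB) //.
congr lim; rewrite (_ : (fun i => \int[mu]_(x in An i) (gk k x)%:E) = (fun i => \int[mu]_(x in Bn i) (Gk k x)%:E))%E //; apply/funext => n; exact: subst_n.
Qed.


Lemma integrable_gk k : mu.-integrable `]0%R, +oo[%classic (fun x => (gk k x)%:E).
Proof.
apply/integrableP; split; first by apply/measurable_EFinP; exact: mgk.
rewrite (_ : (\int[mu]_(x in `]0%R, +oo[) `|(gk k x)%:E|)%E = (mk k)%:E) ?ltry //.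
rewrite -int_gk; apply: eq_integral => x; rewrite inE /= in_itv /= andbT => x0.
by rewrite ger0_norm // gk_ge0.
Qed.

Lemma int_sum_gk (J : finType) (a : J -> R) (e : J -> nat) :
  (\int[mu]_(x in `]0%R, +oo[) (\sum_j a j * gk (e j) x)%:E =
   (\sum_j a j * mk (e j))%:E)%E.
Proof.
under eq_integral do rewrite -sumEFin.
rewrite integral_sum //; last first.
  move=> j; rewrite (_ : (fun x => _) = (fun x => (a j)%:E * (gk (e j) x)%:E)%E); last by apply/funext => x; rewrite EFinM.
  by apply: integrableZl => //; exact: integrable_gk.
rewrite -sumEFin; apply: eq_bigr => j _.
under eq_integral do rewrite EFinM.
by rewrite integralZl //; [rewrite int_gk|exact: integrable_gk].
Qed.


Lemma iter_int_sum n : forall (J : finType) (c : J -> R) (e : J -> nat -> nat)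
    (f : seq R -> R),
  (forall u, size u = n -> (forall x, x \in u -> 0 < x) ->
     f u = \sum_j c j * \prod_(i < n) gk (e j i) u`_i) ->
  iter_int n (fun u => (f u)%:E) = (\sum_j c j * \prod_(i < n) mk (e j i))%:E.
Proof.
elim: n => [|n IH] J c e f hf /=.
  by rewrite hf //; congr EFin; apply: eq_bigr => j _; rewrite !big_ord0.
transitivity (\int[mu]_(x in `]0%R, +oo[)
   (\sum_j (c j * \prod_(i < n) mk (e j i.+1)) * gk (e j 0%N) x)%:E)%E.
  apply: eq_integral => x; rewrite inE /= in_itv /= andbT => x0.
  rewrite (IH J (fun j => c j * gk (e j 0%N) x) (fun j i => e j i.+1) (fun s => f (x :: s))).
    by congr EFin; apply: eq_bigr => j _; rewrite mulrAC.
  move=> s hs hpos; rewrite hf /=; last 2 first.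
  - by rewrite hs.
  - by move=> y; rewrite inE => /orP[/eqP->|/hpos].
  by apply: eq_bigr => j _; rewrite big_ord_recl /= mulrA.
rewrite int_sum_gk; congr EFin; apply: eq_bigr => j _.
by rewrite big_ord_recl /= mulrAC mulrA.
Qed.

Lemma Z2_integrand_sum n (u : seq R) : size u = n.+1 ->
  Z2_integrand sigma u = \sum_(pq : 'S_n.+1 * 'S_n.+1)
    ((-1) ^+ pq.1 * (-1) ^+ pq.2) *
    \prod_(i < n.+1) gk (pq.1 (inord i) + pq.2 (inord i))%N u`_i.
Proof.
move=> hs; rewrite /Z2_integrand.
rewrite (big_nth 0) hs big_mkord.
have -> : vandermonde u = \prod_(i < n.+1) \prod_(j < n.+1 | (i < j)%N) (u`_i - u`_j).
  by rewrite /vandermonde; move: (size u) hs => m hm; subst m.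
rewrite real_normK ?num_real //.
set a := \row_(j < n.+1) u`_j.
have -> : (\prod_(i < n.+1) \prod_(j < n.+1 | (i < j)%N) (u`_i - u`_j)) ^+ 2 =
   (\det (Vandermonde n.+1 a)^T) ^+ 2.
  rewrite det_tr det_Vandermonde -!prodrXl; apply: eq_bigr => i _.
  rewrite -!prodrXl; apply: eq_bigr => j _.
  by rewrite !mxE -opprB sqrrN.
rewrite /determinant [(\sum_s _) ^+ 2]expr2 big_distrlr /=.
rewrite pair_bigA mulr_sumr; apply: eq_bigr => [[p q]] _ /=.
rewrite /gk; under [in RHS]eq_bigr do rewrite !inord_val exprD mulrA.
rewrite !big_split /=.
have -> : \prod_(i < n.+1) (Vandermonde n.+1 a)^T i (p i) = \prod_(i < n.+1) u`_i ^+ p i.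
  by apply: eq_bigr => i _; rewrite !mxE.
have -> : \prod_(i < n.+1) (Vandermonde n.+1 a)^T i (q i) = \prod_(i < n.+1) u`_i ^+ q i.
  by apply: eq_bigr => i _; rewrite !mxE.
set A := \prod_(i < n.+1) expR _.
set B := \prod_(i < n.+1) u`_i ^+ p i.
set C := \prod_(i < n.+1) u`_i ^+ q i.
set s1 := (-1) ^+ p; set s2 := (-1) ^+ q.
clearbody A B C s1 s2; ring.
Qed.


Lemma sum_perm_prod n (m : nat -> R) :
  \sum_(pq : 'S_n * 'S_n) ((-1) ^+ pq.1 * (-1) ^+ pq.2) * \prod_(i < n) m (pq.1 i + pq.2 i)%N
  = n`!%:R * \det (\matrix_(i < n, j < n) m (i + j)%N).
Proof.
rewrite -(pair_bigA _ (fun (p q : 'S_n) => ((-1) ^+ p * (-1) ^+ q) * \prod_(i < n) m (p i + q i)%N)) /=.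
transitivity (\sum_(p : 'S_n) \det (\matrix_(i < n, j < n) m (i + j)%N)).
  apply: eq_bigr => p _; rewrite /determinant (reindex_inj (mulgI p)) /=.
  apply: eq_bigr => r _; rewrite odd_permM signr_addb mulrA -expr2 sqrr_sign mul1r.
  congr (_ * _); rewrite [RHS](reindex_inj (@perm_inj _ p)) /=.
  by apply: eq_bigr => i _; rewrite permM !mxE.
by rewrite sumr_const card_Sn mulr_natl.
Qed.

Definition yy (i : nat) : R := expR ((i.+1)%:R * sigma ^+ 2).

Lemma detM N : \det (\matrix_(i < N, j < N) mk (i + j)%N) =
  \prod_(i < N) (Num.sqrt (2 * pi * sigma ^+ 2) * expR ((i.+1)%:R ^+ 2 * sigma ^+ 2 / 2)) *
  \prod_(i < N) \prod_(j < N | (i < j)%N) (yy j - yy i) *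
  \prod_(j < N) expR (j%:R ^+ 2 * sigma ^+ 2 / 2).
Proof.
set a := \row_(i < N) (Num.sqrt (2 * pi * sigma ^+ 2) * expR ((i.+1)%:R ^+ 2 * sigma ^+ 2 / 2)).
set b := \row_(j < N) expR (j%:R ^+ 2 * sigma ^+ 2 / 2).
set y := \row_(i < N) yy i.
have -> : \matrix_(i < N, j < N) mk (i + j)%N = diag_mx a *m (Vandermonde N y)^T *m diag_mx b.
  apply/matrixP => i j; rewrite mul_mx_diag mul_diag_mx !mxE /mk /yy -expRM_natl.
  rewrite mulrA -!mulrA; congr (_ * _); rewrite -!expRD; congr expR.
  rewrite -addSn natrD; set u := (i.+1)%:R; set v := (j)%:R; clearbody u v; by field.
rewrite !det_mulmx !det_diag det_tr det_Vandermonde.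
congr (_ * _ * _); [by apply: eq_bigr => i _; rewrite mxE
  |by apply: eq_bigr => i _; apply: eq_bigr => j _; rewrite !mxE
  |by apply: eq_bigr => i _; rewrite mxE].
Qed.

Lemma tri_prod (F : nat -> nat -> R) N :
  \prod_(i < N) \prod_(j < N | (i < j)%N) F i j = \prod_(j < N) \prod_(i < j) F i j.
Proof.
elim: N => [|N IH]; first by rewrite !big_ord0.
rewrite big_ord_recr /= [RHS]big_ord_recr /= -IH.
rewrite [X in _ * X](_ : _ = 1); last by apply: big_pred0 => j; rewrite ltnNge leq_ord.
rewrite mulr1 -big_split /=; apply: eq_bigr => i _.
by rewrite big_mkcond big_ord_recr /= ltn_ord -big_mkcond.
Qed.

Lemma tri_prod2 (f : nat -> R) N :
  \prod_(j < N) \prod_(i < j) f (j - i)%N = \prod_(1 <= k < N) f k ^+ (N - k).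
Proof.
elim: N => [|N IH]; first by rewrite big_ord0 big_geq.
rewrite big_ord_recr /= IH.
have -> : \prod_(i < N) f (N - i)%N = \prod_(1 <= k < N.+1) f k.
  by rewrite big_rev_mkord subn1 /=; apply: eq_bigr => i _; rewrite subSS.
case: N IH => [|N] IH; first by rewrite !big_geq // mul1r.
have h1 (G : nat -> R) : \prod_(1 <= k < N.+2) G k = (\prod_(1 <= k < N.+1) G k) * G N.+1.
  by rewrite big_nat_recr.
rewrite h1 (h1 (fun k => f k ^+ (N.+2 - k))) mulrA subSnn expr1.
congr (_ * _); rewrite -big_split /=; apply: eq_big_nat => k /andP[k1 kN].
by rewrite (subSn (ltnW kN)) exprS mulrC.
Qed.


Lemma sum_sq N : \sum_(j < N) ((j.+1)%:R ^+ 2 / 2 + j%:R * (j.+1)%:R + j%:R ^+ 2 / 2)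
  = (4 * N%:R ^+ 3 - N%:R) / 6 :> R.
Proof.
elim: N => [|N IH]; first by rewrite big_ord0 mulr0n expr0n /= mulr0 subr0 mul0r.
rewrite big_ord_recr /= IH; set u := N%:R; rewrite !mulrSr -/u.
clearbody u; by field.
Qed.

Definition fk (k : nat) : R := 1 - expR (- k%:R * sigma ^+ 2).

Lemma yyB (i j : nat) : (i < j)%N -> yy j - yy i = yy j * fk (j - i)%N.
Proof.
move=> ij; rewrite /fk mulrBr mulr1; congr (_ - _).
rewrite /yy -expRD natrB ?(ltnW ij) //; congr expR.
rewrite !mulrSr; by ring.
Qed.

Lemma final N : expR (- (N ^ 3)%:R * sigma ^+ 2 / 2) * \det (\matrix_(i < N, j < N) mk (i + j)%N)
  = Num.sqrt (2 * pi * sigma ^+ 2) ^+ N * expR ((N ^ 3 - N)%:R * sigma ^+ 2 / 6)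
    * \prod_(1 <= k < N) (1 - expR (- k%:R * sigma ^+ 2)) ^+ (N - k).
Proof.
rewrite detM (tri_prod (fun i j => yy j - yy i)).
have -> : \prod_(j < N) \prod_(i < j) (yy j - yy i) =
    \prod_(j < N) yy j ^+ j * \prod_(1 <= k < N) (1 - expR (- k%:R * sigma ^+ 2)) ^+ (N - k).
  rewrite -(tri_prod2 fk N) -big_split; apply: eq_bigr => j _ /=.
  rewrite (eq_bigr (fun i : 'I_j => yy j * fk (j - i)%N)); last first.
    by move=> i _; rewrite yyB.
  by rewrite big_split /= prodr_const card_ord.
rewrite big_split /= prodr_const card_ord.
set P := \prod_(1 <= k < N) _.
set A := \prod_(i < N) expR _.
set B := \prod_(j < N) yy j ^+ j.
set C := \prod_(j < N) expR _.
have hABC : A * B * C = expR (sigma ^+ 2 * ((4 * N%:R ^+ 3 - N%:R) / 6)).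
  rewrite -sum_sq mulr_sumr expR_sum /A /B /C -!big_split /=.
  apply: eq_bigr => j _; rewrite /yy -expRM_natl -!expRD; congr expR.
  set u := j%:R; rewrite !mulrSr -/u; clearbody u; by field.
have hN : (N <= N ^ 3)%N by case: (N) => // n; rewrite -{1}(expn1 n.+1) leq_pexp2l.
have he : expR (- (N ^ 3)%:R * sigma ^+ 2 / 2) * expR (sigma ^+ 2 * ((4 * N%:R ^+ 3 - N%:R) / 6))
   = expR ((N ^ 3 - N)%:R * sigma ^+ 2 / 6).
  rewrite -expRD natrB // natrX; congr expR; set u := N%:R; clearbody u; by field.
rewrite -he -hABC; set c := Num.sqrt _; set e1 := expR _.
clearbody c e1 A B C P; ring.
Qed.

End oneD.

Theorem proposition4 (R : realType) (N : nat) (omega sigma : R) :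
  (1 <= N)%N -> 0 < omega -> 0 < sigma ->
  Z2 omega N sigma =
  (omega / 2 ^+ (N ^ 2) * Num.sqrt (2 * pi * sigma ^+ 2) ^+ N
   * expR ((N ^ 3 - N)%:R * sigma ^+ 2 / 6)
   * \prod_(1 <= k < N) (1 - expR (- k%:R * sigma ^+ 2)) ^+ (N - k))%:E.
Proof.
move=> N1 om0 s0.
case: N N1 => // n _.
rewrite /Z2.
rewrite (@iter_int_sum R sigma s0 n.+1 ('S_n.+1 * 'S_n.+1)%type
  (fun pq => (-1) ^+ pq.1 * (-1) ^+ pq.2)
  (fun pq i => (pq.1 (inord i) + pq.2 (inord i))%N) (Z2_integrand sigma)); last first.
  by move=> u hs _; exact: Z2_integrand_sum.
rewrite -EFinM; congr EFin.
rewrite (eq_bigr (fun pq : 'S_n.+1 * 'S_n.+1 => ((-1) ^+ pq.1 * (-1) ^+ pq.2) *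
   \prod_(i < n.+1) mk R sigma (pq.1 i + pq.2 i)%N)); last first.
  by move=> pq _; congr (_ * _); apply: eq_bigr => i _; rewrite inord_val.
rewrite sum_perm_prod.
set D := \det _.
have p0 : (2 * pi : R) ^+ n.+1 != 0 by rewrite expf_neq0 // mulf_neq0 // gt_eqF // pi_gt0.
have f0 : ((n.+1)`!%:R : R) != 0 by rewrite pnatr_eq0 -lt0n fact_gt0.
have t0 : (2 : R) ^+ (n.+1 ^ 2) != 0 by rewrite expf_neq0.
have -> : C_N2 omega n.+1 sigma / ((2 * pi) ^+ n.+1 * (n.+1)`!%:R) * ((n.+1)`!%:R * D)
    = omega / 2 ^+ (n.+1 ^ 2) * (expR (- (n.+1 ^ 3)%:R * sigma ^+ 2 / 2) * D).
  rewrite /C_N2; move: p0 f0 t0.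
  set a := (2 * pi : R) ^+ n.+1; set b := ((n.+1)`!%:R : R);
  set t := (2 : R) ^+ (n.+1 ^ 2); set e := expR _.
  clearbody a b t e D => p0 f0 t0; field; by rewrite p0 f0 t0.
rewrite /D final; set c := Num.sqrt _; set e := expR _; set P := \prod_(1 <= k < n.+1) _.
clearbody c e P; ring.
Qed.
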